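(* Let $\phi:\mathbb{R}\to\mathbb{R}$ be a differentiable elementwise nonlinearity with $\frac{\phi(z)}{\phi'(z)}<\infty$ for all $z$. Let $x^{(1)},\dots,x^{(n)}\in\mathbb{R}^{k_0}$ with $\|x^{(i)}\|_2=1$ for all $i$. For each $i\in[n]$ let $f_i(z)=W_1^{(i)}\phi(W_2^{(i)}z)$ be a 1-hidden-layer network of width $k$, initialized with $W_1^{(i),(0)}=x^{((i\bmod n)+1)}{u^{(i),(0)}}^T$, $W_2^{(i),(0)}=v^{(i),(0)}{x^{(i)}}^T$ where $u^{(i),(0)},v^{(i),(0)}\in\mathbb{R}^k$ each have all entries equal, and trained by gradient descent with learning rate $\gamma\to0$ on $\frac12\|x^{((i\bmod n)+1)}-f_i(x^{(i)})\|_2^2$, so that after training $f_i(z)=x^{((i\bmod n)+1)}{u^{(i)}}^T\phi(v^{(i)}{x^{(i)}}^Tz)$ with $u^{(i)},v^{(i)}\in\mathbb{R}^k$ having all entries equal, $u^{(i)}_j\phi(v^{(i)}_j)=1/k$, and $\frac{(u^{(i)}_j)^2-(u^{(i),(0)}_j)^2}{2}=\int_{v^{(i),(0)}_j}^{v^{(i)}_j}\frac{\phi(z)}{\phi'(z)}dz$. Then the composition $f=f_n\circ f_{n-1}\circ\cdots\circ f_1$ satisfies $$\lambda_1(\mathbf{J}(f(x^{(1)})))=\prod_{i=1}^n\frac{\phi'(v_j^{(i)})v_j^{(i)}}{\phi(v_j^{(i)})}$$ (for any $j\in[k]$).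
   Context: $\phi$ is applied coordinatewise. $\mathbf{J}(f(x^{(1)}))$ denotes the Jacobian of $f$ at $x^{(1)}$ and $\lambda_1$ its top eigenvalue (eigenvalue of largest absolute value). Gradient descent with learning rate $\gamma$ updates each weight matrix by $W\leftarrow W-\gamma\nabla_W\mathcal{L}$; trained weights are those at the end of training in the limit $\gamma\to0$ (gradient flow). *)

(* Defs.v *)
From Stdlib Require Import Reals.
From Coquelicot Require Import Coquelicot.
From mathcomp Require Import all_boot all_order all_algebra.
From mathcomp Require Import Rstruct complex.
Set Implicit Arguments. Unset Strict Implicit. Unset Printing Implicit Defensive.
Import Order.TTheory GRing.Theory Num.Theory.
Local Open Scope ring_scope.
Local Open Scope complex_scope.

Definition deriv1 (g : R -> R) : R -> R := fun z => Derive g z.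

Definition norm2 (k0 : nat) (x : 'cV[R]_k0) : R :=
  Num.sqrt (\sum_(a < k0) x a 0 ^+ 2).

(* The one-hidden-layer network z |-> x_next u^T phi(v x_i^T z),
   phi applied coordinatewise; u, v in R^k. *)
Definition net (phi : R -> R) (k0 k : nat) (x_next x_cur : 'cV[R]_k0)
  (u v : 'cV[R]_k) (z : 'cV[R]_k0) : 'cV[R]_k0 :=
  (\sum_(j < k) u j 0 * phi (v j 0 * (x_cur^T *m z) 0 0)) *: x_next.

(* Composition f_{n-1} o ... o f_0 (0-based indices). *)
Definition compose_nets (k0 n : nat) (f : 'I_n -> 'cV[R]_k0 -> 'cV[R]_k0)
  (z : 'cV[R]_k0) : 'cV[R]_k0 :=
  foldl (fun w i => f i w) z (enum 'I_n).

Definition jacobian (k0 : nat) (F : 'cV[R]_k0 -> 'cV[R]_k0) (x : 'cV[R]_k0)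
  : 'M[R]_k0 :=
  \matrix_(a, b) Derive (fun t : R => F (x + t *: delta_mx b 0) a 0) 0%R.

Definition is_top_eigenvalue (k0 : nat) (A : 'M[R]_k0) (lam : R) : Prop :=
  let AC := map_mx (fun r : R => r%:C) A in
  eigenvalue AC lam%:C /\ forall z : R[i], eigenvalue AC z -> `|z| <= `|lam%:C|.

Definition all_equal (k : nat) (u : 'cV[R]_k) : Prop :=
  forall j j' : 'I_k, u j 0 = u j' 0.

(* Main.v *)
Require Import Defs.
From Stdlib Require Import Reals.
From Coquelicot Require Import Coquelicot.
From mathcomp Require Import all_boot all_order all_algebra.
From mathcomp Require Import Rstruct complex.
Import Order.TTheory GRing.Theory Num.Theory.
Local Open Scope ring_scope.
Set Implicit Arguments.
Lemma foldl_deriv (I : Type) (gg : I -> R -> R) (D : I -> R) (s : seq I) :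
  (forall i, gg i 1 = 1) -> (forall i, is_derive (gg i) 1 (D i)) ->
  forall (h : R -> R) (d : R), h 1 = 1 -> is_derive h 1 d ->
  foldl (fun t i => gg i t) (h 1) s = 1 /\
  is_derive (fun t => foldl (fun t i => gg i t) (h t) s) 1 (d * \prod_(i <- s) D i).
Proof.
move=> g1 gd; elim: s => [|i s IH] h d h1 hd /=.
  by rewrite big_nil mulr1.
have hd' : is_derive (fun t => gg i (h t)) 1 (D i * d).
  have := is_derive_comp (gg i) h 1 (D i) d.
  by rewrite h1 => /(_ (gd i) hd); rewrite /scal /= /mult /= mulrC.
have h1' : gg i (h 1) = 1 by rewrite h1 g1.
have [A B] := IH (fun t => gg i (h t)) (D i * d) h1' hd'.
split; first exact: A. by rewrite big_cons mulrA [d * _]mulrC.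
Qed.

Lemma iota_path m k : path (fun a b => b == a.+1) m (iota m.+1 k).
Proof. by elim: k m => //= k IH m; rewrite eqxx IH. Qed.

Lemma iota_last m k : last m (iota m.+1 k) = (m + k)%N.
Proof. by elim: k m => [|k IH] m /=; rewrite ?addn0 // IH addnS. Qed.

Lemma fold_net k0 n (x : 'I_n -> 'cV[R]_k0) (g : 'I_n -> R -> R)
  (hx : forall i, ((x i)^T *m x i) 0 0 = 1) (s : seq 'I_n) :
  forall (i : 'I_n) (c : R),
  path (fun a b : 'I_n => val b == (val a).+1) i s ->
  foldl (fun w j => g j (((x j)^T *m w) 0 0) *: x (ordS j)) (c *: x (ordS i)) s
  = foldl (fun t j => g j t) c s *: x (ordS (last i s)).
Proof.
elim: s => [|j s IH] i c //= /andP [/eqP hj hp].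
have -> : ordS i = j.
  apply: val_inj => /=; rewrite modn_small // -hj; exact: ltn_ord.
by rewrite -scalemxAr mxE hx mulr1 IH.
Qed.

Lemma top_eig_rank1 k0 (y : 'cV[R]_k0) (lam : R) :
  ((y^T *m y) 0 0 = 1) -> is_top_eigenvalue (lam *: (y *m y^T)) lam.
Proof.
move=> hy.
set Y : 'cV[R[i]]_k0 := map_mx (fun r : R => r%:C%C) y.
have hY : Y^T *m Y = 1%:M.
  apply/matrixP => a b; rewrite !ord1 [RHS]mxE /= mulr1n.
  rewrite -[1]/((GRing.one R)%:C%C) -hy !mxE rmorph_sum.
  by apply: eq_bigr => l _; rewrite !mxE rmorphM.
have hA : map_mx (fun r : R => r%:C%C) (lam *: (y *m y^T)) = lam%:C%C *: (Y *m Y^T).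
  apply/matrixP => a b; rewrite !mxE !big_ord1 !mxE.
  by rewrite !rmorphM.
rewrite /is_top_eigenvalue hA; split.
  apply/eigenvalueP; exists Y^T.
    by rewrite -scalemxAr mulmxA hY mul1mx.
  apply/eqP => Y0; move: hY; rewrite Y0 mul0mx => /matrixP /(_ 0 0).
  by rewrite !mxE /= => /esym/eqP; rewrite oner_eq0.
move=> z /eigenvalueP [w hw w0].
have [->|z0] := eqVneq z 0; first by rewrite normr0.
set c := w *m Y.
have e1 : z *: w = lam%:C%C *: (c *m Y^T) by rewrite -hw -scalemxAr mulmxA.
have e2 : z *: c = lam%:C%C *: c.
  by rewrite /c scalemxAl e1 -scalemxAl -mulmxA hY mulmx1.
have [c0|c0] := eqVneq c 0.
  by move: e1; rewrite c0 mul0mx scaler0 => /eqP; rewrite scalemx_eq0 (negPf z0) (negPf w0).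
move/eqP: e2; rewrite -subr_eq0 -scalerBl scalemx_eq0 (negPf c0) orbF subr_eq0 => /eqP ->.
by [].
Qed.

Lemma t1 n (D : 'I_n -> R) : \prod_(i <- enum 'I_n) D i = \prod_(i < n) D i.
Proof. by rewrite big_enum. Qed.

Lemma norm_inner k0 (y : 'cV[R]_k0) : norm2 y = 1 -> (y^T *m y) 0 0 = 1.
Proof.
rewrite /norm2 => h.
have s0 : 0 <= \sum_(a < k0) y a 0 ^+ 2 by apply: sumr_ge0 => a _; exact: sqr_ge0.
have -> : 1 = Num.sqrt (\sum_(a < k0) y a 0 ^+ 2) ^+ 2 :> R by rewrite h expr1n.
rewrite sqr_sqrtr // mxE.
by apply: eq_bigr => a _; rewrite mxE expr2.
Qed.

Lemma gderiv (phi : R -> R) k (u v : R) (hd : forall z, ex_derive phi z) :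
  is_derive (fun t => k%:R * (u * phi (v * t))) 1
    (k%:R * (u * (v * Derive phi v))).
Proof.
apply: is_derive_scal; apply: is_derive_scal.
have h1 : is_derive (fun t : R => v * t) 1 v.
  have := is_derive_scal id (GRing.one R) v (GRing.one R) (is_derive_id (GRing.one R_AbsRing)).
  by move=> H; rewrite /= RmultE mulr1 in H; exact: H.
have h2 := Derive_correct phi (v * 1) (hd _).
have := is_derive_comp phi (fun t => v * t) 1 _ _ h2 h1.
by rewrite /scal /= /mult /= mulr1.
Qed.

Unset Implicit Arguments.

Theorem theorem4 (phi : R -> R) (k0 k n : nat) (n_gt0 : (0 < n)%N)
  (x : 'I_n -> 'cV[R]_k0)
  (u0 v0 u v : 'I_n -> 'cV[R]_k) :
  (forall z : R, ex_derive phi z) ->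
  (forall z : R, deriv1 phi z <> 0) ->
  (forall i, norm2 (x i) = 1) ->
  (forall i, all_equal (u0 i)) -> (forall i, all_equal (v0 i)) ->
  (forall i, all_equal (u i)) -> (forall i, all_equal (v i)) ->
  (forall i (j : 'I_k), u i j 0 * phi (v i j 0) = k%:R^-1) ->
  (forall i (j : 'I_k),
      ex_RInt (fun z => phi z / deriv1 phi z) (v0 i j 0) (v i j 0) /\
      (u i j 0 ^+ 2 - u0 i j 0 ^+ 2) / 2
        = RInt (fun z => phi z / deriv1 phi z) (v0 i j 0) (v i j 0)) ->
  let f := compose_nets (fun i => net phi (x (ordS i)) (x i) (u i) (v i)) in
  forall j : 'I_k,
    is_top_eigenvalue (jacobian f (x (Ordinal n_gt0)))
      (\prod_(i < n) (deriv1 phi (v i j 0) * v i j 0 / phi (v i j 0))).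
Proof.
move=> hder _ hnorm _ _ hu hv huphi _ f j.
have hx i : ((x i)^T *m x i) 0 0 = 1 by apply: norm_inner.
have kpos : (0 < k)%N by apply: leq_ltn_trans (leq0n j) (ltn_ord j).
pose g i t := \sum_(l < k) u i l 0 * phi (v i l 0 * t).
pose D i := deriv1 phi (v i j 0) * v i j 0 / phi (v i j 0).
have gE i t : g i t = k%:R * (u i j 0 * phi (v i j 0 * t)).
  rewrite /g (eq_bigr (fun _ => u i j 0 * phi (v i j 0 * t))); last first.
    by move=> l _; rewrite (hu i l j) (hv i l j).
  by rewrite sumr_const card_ord mulr_natl.
have phinz i : phi (v i j 0) != 0.
  apply/eqP => e; have := huphi i j; rewrite e mulr0 => /esym/eqP.
  by rewrite invr_eq0 pnatr_eq0 => /eqP kk; rewrite kk in kpos.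
have hk i : k%:R * u i j 0 = (phi (v i j 0))^-1.
  apply: (mulIf (phinz i)); rewrite -mulrA huphi divff ?mulVf ?phinz //.
  by rewrite pnatr_eq0 -lt0n kpos.
have hg1 i : g i 1 = 1 by rewrite gE mulr1 mulrA hk mulVf.
have hgd i : is_derive (g i) 1 (D i).
  apply: (is_derive_ext (fun t => k%:R * (u i j 0 * phi (v i j 0 * t)))).
    by move=> t; rewrite gE.
  have := gderiv k (u i j 0) (v i j 0) hder.
  suff -> : k%:R * (u i j 0 * (v i j 0 * Derive phi (v i j 0))) = D i by [].
  rewrite /D /deriv1.
by rewrite mulrA hk mulrC [v i j 0 * _]mulrC.
set a0 := Ordinal n_gt0.
have [s [Es [hp hl]]] : exists s, enum 'I_n = a0 :: s /\
    path (fun a b : 'I_n => val b == (val a).+1) a0 s /\ val (last a0 s) = n.-1.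
  have hi : iota 0 n = 0%N :: iota 1%N n.-1.
    by rewrite -[in LHS](prednK n_gt0).
  have := val_enum_ord n; rewrite hi.
  case: (enum 'I_n) => [|a s] //= [ha hs].
  have -> : a = a0 by apply: val_inj.
  exists s; split=> //; split.
    have := iota_path 0%N n.-1; rewrite -hs.
    have -> : 0%N = val a0 by []. by rewrite path_map.

  by rewrite -(last_map val) /= hs iota_last.
have hlast : ordS (last a0 s) = a0.
  by apply: val_inj => /=; rewrite hl (prednK n_gt0) modnn.
pose K t := foldl (fun t i => g i t) (g a0 t) s.
have fE z : f z = K (((x a0)^T *m z) 0 0) *: x a0.
  rewrite /f /compose_nets Es /=.
  have := @fold_net k0 n x g hx s a0 (g a0 (((x a0)^T *m z) 0 0)) hp.
  rewrite hlast => <-; by [].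
have [K1 Kd] := @foldl_deriv _ g D s hg1 hgd (g a0) (D a0) (hg1 a0) (hgd a0).
rewrite -/(K 1) in K1.
have lamE : D a0 * \prod_(i <- s) D i = \prod_(i < n) D i.
  by rewrite -t1 Es big_cons.
rewrite lamE in Kd.
suff -> : jacobian f (x a0) = (\prod_(i < n) D i) *: (x a0 *m (x a0)^T).
  exact: top_eig_rank1.
apply/matrixP => a b; rewrite !mxE big_ord1 !mxE.
set c := x a0 b 0; set d := x a0 a 0.
rewrite (Derive_ext _ (fun t => K (1 + t * c) * d)); last first.
  move=> t; rewrite fE mxE; congr (K _ * _).
  rewrite mulmxDr -scalemxAr -colE mxE hx.
  by rewrite !mxE.
apply: is_derive_unique.
have h1 : is_derive (fun t : R => 1 + t * c) 0 c.
  have := is_derive_plus (fun=> ((1 : R) : R_AbsRing)) (fun t : R_AbsRing => scal t c) ((0 : R) : R_AbsRing) _ _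
    (is_derive_const _ _) (is_derive_scal_l id ((0 : R) : R_AbsRing) _ c (is_derive_id _)).
  rewrite /plus /zero /scal /= /mult /=.
  set y := (X in is_derive _ _ X -> _) => H.
  have e : y = c by rewrite /y /Hierarchy.one /= RplusE RmultE R0E R1E add0r mul1r.
  rewrite e in H; exact H.
have Kd' : is_derive K (1 + 0 * c) (\prod_(i < n) D i) by rewrite mul0r addr0.
have h2 := is_derive_comp K (fun t => 1 + t * c) 0 _ _ Kd' h1.
have h3 := is_derive_scal _ _ d _ h2.
have e : d * scal c (\prod_(i < n) D i) = \prod_(i < n) D i * (d * c).
  by rewrite /scal /= /mult /= RmultE mulrA mulrC.
apply: (@is_derive_ext R_AbsRing R_NormedModule (fun t : R => d * K (1 + t * c))) => [t|]; first by rewrite mulrC.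
rewrite -e; exact h3.
Qed.
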